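(* Let $\alpha,\beta,\mu,\nu>0$, $0<z\le1$, and let $\mathbf a=(a_n)_{n\ge1}$ be a sequence of positive numbers with $a_n\to\infty$ such that $\zeta_{\mu,\nu}(\alpha,\beta,z)<\infty$. Then for all $r>0$, $$2\zeta_{\mu,\nu}(\alpha,\beta,z)\exp\Big\{-\mu\,\frac{\zeta_{\mu+1,\nu}(\alpha,\beta,z)}{\zeta_{\mu,\nu}(\alpha,\beta,z)}\,r^2\Big\}\le S^{(\alpha,\beta)}_{\mu,\nu}(r,\mathbf a;z).$$
   Context: $S_{\mu,\nu}^{(\alpha,\beta)}(r,\mathbf a;z)=\sum_{n=1}^\infty \frac{2a_n^{\beta}(\nu)_n z^n}{(a_n^{\alpha}+r^2)^{\mu}\,n!}$, $(\nu)_n=\Gamma(\nu+n)/\Gamma(\nu)$, and $\zeta_{\mu,\nu}(\alpha,\beta,z)=\sum_{n=1}^\infty\frac{(\nu)_n z^n}{n!\,a_n^{\alpha\mu-\beta}}$. *)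

(* Defs.v *)
From Stdlib Require Import Reals Lra Arith Factorial.
Open Scope R_scope.

(* Pochhammer symbol (nu)_n = Gamma(nu+n)/Gamma(nu) = nu (nu+1) ... (nu+n-1). *)
Fixpoint poch (nu : R) (n : nat) : R :=
  match n with
  | O => 1
  | S k => poch nu k * (nu + INR k)
  end.

(* n-th term (n >= 1) of zeta_{mu,nu}(alpha,beta,z):
   (nu)_n z^n / (n! a_n^(alpha mu - beta)). *)
Definition zeta_term (mu nu alpha beta z : R) (a : nat -> R) (n : nat) : R :=
  poch nu n * z ^ n / (INR (fact n) * Rpower (a n) (alpha * mu - beta)).

(* n-th term (n >= 1) of S_{mu,nu}^{(alpha,beta)}(r, a; z). *)
Definition S_term (mu nu alpha beta r z : R) (a : nat -> R) (n : nat) : R :=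
  2 * Rpower (a n) beta * poch nu n * z ^ n
    / (Rpower (Rpower (a n) alpha + r ^ 2) mu * INR (fact n)).

Definition sum_from1 (f : nat -> R) (l : R) : Prop :=
  infinite_sum (fun k => f (S k)) l.

(* Main.v *)
Require Import Defs.
From Stdlib Require Import Reals Lra Lia Factorial Arith.
Open Scope R_scope.

Lemma poch_pos nu n : 0 < nu -> 0 < poch nu n.
Proof.
  intros H; induction n; simpl; [lra|].
  apply Rmult_lt_0_compat; auto. pose proof (pos_INR n); lra.
Qed.

Lemma exp_le' x y : x <= y -> exp x <= exp y.
Proof. intros [H|H]; [left; apply exp_increasing; auto | subst; lra]. Qed.

Lemma ln_le' x y : 0 < x -> x <= y -> ln x <= ln y.
Proof. intros H [H1|H1]; [left; apply ln_increasing; auto | subst; lra]. Qed.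

Lemma key (mu nu alpha beta z r : R) (a : nat -> R) n
  (Hmu : 0 < mu) (Hnu : 0 < nu) (Hz : 0 < z) (HA : 0 < a n) :
  0 < zeta_term mu nu alpha beta z a n /\
  zeta_term (mu+1) nu alpha beta z a n
    = zeta_term mu nu alpha beta z a n / Rpower (a n) alpha /\
  2 * zeta_term mu nu alpha beta z a n * exp (- mu * r ^ 2 / Rpower (a n) alpha)
    <= S_term mu nu alpha beta r z a n /\
  0 <= S_term mu nu alpha beta r z a n /\
  S_term mu nu alpha beta r z a n <= 2 * zeta_term mu nu alpha beta z a n.
Proof.
  unfold zeta_term, S_term, Rpower.
  set (L := ln (a n)).
  set (B := exp (alpha * L)).
  set (K := poch nu n * z ^ n / INR (fact n)).
  assert (HK : 0 < K).
  { unfold K. apply Rdiv_lt_0_compat. apply Rmult_lt_0_compat.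
    apply poch_pos; auto. apply pow_lt; auto. apply INR_fact_lt_0. }
  assert (HB : 0 < B) by apply exp_pos.
  assert (Hr2 : 0 <= r ^ 2) by (apply pow2_ge_0).
  assert (HBr : 0 < B + r ^ 2) by lra.
  assert (Ew : forall x, poch nu n * z ^ n / (INR (fact n) * exp (x * L))
             = K * exp (- (x * L))).
  { intros x. unfold K. rewrite exp_Ropp. field.
    split; [apply Rgt_not_eq, exp_pos | apply Rgt_not_eq, INR_fact_lt_0]. }
  rewrite !Ew.
  assert (Es : 2 * exp (beta * L) * poch nu n * z ^ n /
      (exp (mu * ln (B + r ^ 2)) * INR (fact n)) =
      2 * K * exp (beta * L - mu * ln (B + r ^ 2))).
  { unfold K, Rminus. rewrite exp_plus, exp_Ropp. field.
    split; apply Rgt_not_eq; (apply exp_pos || apply INR_fact_lt_0). }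
  rewrite Es.
  assert (lnB : ln B = alpha * L) by (unfold B; apply ln_exp).
  assert (Hl1 : alpha * L <= ln (B + r ^ 2)).
  { rewrite <- lnB. apply ln_le'; lra. }
  assert (Hl2 : ln (B + r ^ 2) <= alpha * L + r ^ 2 / B).
  { rewrite <- (ln_exp (alpha * L + r ^ 2 / B)). apply ln_le'; auto.
    rewrite exp_plus. fold B.
    pose proof (exp_ineq1_le (r ^ 2 / B)).
    apply Rmult_le_compat_l with (r := B) in H; [|lra].
    replace (B * (1 + r ^ 2 / B)) with (B + r ^ 2) in H by (field; lra). lra. }
  pose proof (exp_pos (- ((alpha * mu - beta) * L))) as He.
  split; [apply Rmult_lt_0_compat; auto|].
  split.
  { replace (- ((alpha * (mu + 1) - beta) * L)) with
      (- ((alpha * mu - beta) * L) + - (alpha * L)) by ring.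
    rewrite exp_plus, !exp_Ropp. fold B. field. split; apply Rgt_not_eq; (apply exp_pos || lra). }
  split.
  { replace (2 * (K * exp (- ((alpha * mu - beta) * L))) * exp (- mu * r ^ 2 / B))
      with (2 * K * exp (- ((alpha * mu - beta) * L) + - mu * r ^ 2 / B))
      by (rewrite exp_plus; ring).
    apply Rmult_le_compat_l; [lra|]. apply exp_le'.
    assert (mu * ln (B + r ^ 2) <= mu * (alpha * L + r ^ 2 / B))
      by (apply Rmult_le_compat_l; lra).
    replace (- mu * r ^ 2 / B) with (- (mu * (r ^ 2 / B))) by (field; lra).
    nra. }
  pose proof (exp_pos (beta * L - mu * ln (B + r ^ 2))).
  split; [nra|].
  rewrite <- Rmult_assoc. apply Rmult_le_compat_l; [lra|]. apply exp_le'.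
  assert (mu * (alpha * L) <= mu * ln (B + r ^ 2)) by (apply Rmult_le_compat_l; lra).
  nra.
Qed.

Lemma cv_const c : Un_cv (fun _ => c) c.
Proof. intros e He; exists 0%nat; intros; unfold Rdist; rewrite Rminus_diag, Rabs_R0; lra. Qed.

Lemma bound_inv (alpha : R) (a : nat -> R) (Halpha : 0 < alpha)
  (Hapos : forall n, (1 <= n)%nat -> 0 < a n) (Hainf : cv_infty a) :
  exists M, 0 < M /\ forall n, (1 <= n)%nat -> / Rpower (a n) alpha <= M.
Proof.
  assert (Hfin : forall N, exists M, 0 < M /\
     forall n, (1 <= n <= N)%nat -> / Rpower (a n) alpha <= M).
  { induction N.
    - exists 1; split; [lra|]; intros; lia.
    - destruct IHN as [M [HM HMn]].
      exists (Rmax M (/ Rpower (a (S N)) alpha)); split.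
      + eapply Rlt_le_trans; [apply HM|apply Rmax_l].
      + intros n Hn. destruct (Nat.eq_dec n (S N)) as [->|Hne].
        * apply Rmax_r.
        * eapply Rle_trans; [apply HMn; lia|apply Rmax_l]. }
  destruct (Hainf 1) as [N0 HN0].
  destruct (Hfin N0) as [M [HM HMn]].
  exists (Rmax M 1); split.
  - eapply Rlt_le_trans; [apply HM|apply Rmax_l].
  - intros n Hn. destruct (le_lt_dec n N0) as [Hl|Hl].
    + eapply Rle_trans; [apply HMn; lia|apply Rmax_l].
    + eapply Rle_trans; [|apply Rmax_r].
      assert (H1 : 1 < a n) by (apply HN0; lia).
      assert (H2 : 1 < Rpower (a n) alpha).
      { unfold Rpower. rewrite <- exp_0. apply exp_increasing.
        rewrite <- ln_1 at 1. assert (0 < ln (a n)).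
        { rewrite <- ln_1. apply ln_increasing; lra. }
        rewrite ln_1. nra. }
      left. rewrite <- Rinv_1. apply Rinv_lt_contravar; lra.
Qed.

Theorem mainTheorem8 (alpha beta mu nu z : R) (a : nat -> R) (Z : R)
  (Halpha : 0 < alpha) (Hbeta : 0 < beta) (Hmu : 0 < mu) (Hnu : 0 < nu)
  (Hz0 : 0 < z) (Hz1 : z <= 1)
  (Hapos : forall n, (1 <= n)%nat -> 0 < a n)
  (Hainf : cv_infty a)
  (HZ : sum_from1 (zeta_term mu nu alpha beta z a) Z) :
  forall r : R, 0 < r ->
    exists Z1 Sv : R,
      sum_from1 (zeta_term (mu + 1) nu alpha beta z a) Z1 /\
      sum_from1 (S_term mu nu alpha beta r z a) Sv /\
      2 * Z * exp (- mu * (Z1 / Z) * r ^ 2) <= Sv.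
Proof.
  intros r Hr.
  set (w := fun k => zeta_term mu nu alpha beta z a (S k)).
  set (u := fun k => zeta_term (mu + 1) nu alpha beta z a (S k)).
  set (s := fun k => S_term mu nu alpha beta r z a (S k)).
  set (f := fun k => / Rpower (a (S k)) alpha).
  assert (Hk : forall k, 0 < w k /\ u k = w k * f k /\
     2 * w k * exp (- mu * r ^ 2 * f k) <= s k /\ 0 <= s k /\ s k <= 2 * w k).
  { intros k. destruct (key mu nu alpha beta z r a (S k) Hmu Hnu Hz0
      (Hapos (S k) ltac:(lia))) as (H1 & H2 & H3 & H4 & H5).
    unfold w, u, s, f. split; [auto|]. split; [rewrite H2; unfold Rdiv; ring|].
    split; [|auto].
    replace (- mu * r ^ 2 * / Rpower (a (S k)) alpha)
      with (- mu * r ^ 2 / Rpower (a (S k)) alpha) by (unfold Rdiv; ring). auto. }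
  destruct (bound_inv alpha a Halpha Hapos Hainf) as [M [HM HMb]].
  assert (Hf : forall k, 0 < f k /\ f k <= M).
  { intros k; split; [apply Rinv_0_lt_compat; unfold Rpower; apply exp_pos|].
    apply HMb; lia. }
  assert (HZ' : Un_cv (fun N => sum_f_R0 w N) Z) by exact HZ.
  destruct (Rseries_CV_comp u (fun k => w k * M)) as [Z1 HZ1].
  { intros k. destruct (Hk k) as (H1 & H2 & _). destruct (Hf k).
    rewrite H2; split; [nra|]. apply Rmult_le_compat_l; lra. }
  { exists (M * Z). eapply Un_cv_ext.
    - intros N. apply scal_sum.
    - apply CV_mult; [apply cv_const|exact HZ']. }
  destruct (Rseries_CV_comp s (fun k => w k * 2)) as [Sv HSv].
  { intros k. destruct (Hk k) as (_ & _ & _ & H4 & H5). lra. }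
  { exists (2 * Z). eapply Un_cv_ext.
    - intros N. apply scal_sum.
    - apply CV_mult; [apply cv_const|exact HZ']. }
  assert (HZpos : 0 < Z).
  { apply Rlt_le_trans with (sum_f_R0 w 0).
    - simpl. apply (Hk 0%nat).
    - apply growing_ineq; auto. intros n. simpl.
      pose proof (proj1 (Hk (S n))). lra. }
  exists Z1, Sv. split; [exact HZ1|]. split; [exact HSv|].
  set (c := - mu * (Z1 / Z) * r ^ 2).
  set (C := 2 * exp c).
  set (d := mu * r ^ 2).
  assert (Hid : forall N, sum_f_R0 (fun k => C * (w k - d * u k - c * w k)) N
     = C * (sum_f_R0 w N - d * sum_f_R0 u N - c * sum_f_R0 w N)).
  { induction N; simpl; [ring|rewrite IHN; ring]. }
  assert (Hcv : Un_cv (fun N => C * (sum_f_R0 w N - d * sum_f_R0 u N - c * sum_f_R0 w N))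
                  (C * (Z - d * Z1 - c * Z))).
  { apply CV_mult; [apply cv_const|].
    apply CV_minus; [apply CV_minus; [exact HZ'|]|];
      (apply CV_mult; [apply cv_const|assumption]). }
  replace (2 * Z * exp c) with (C * (Z - d * Z1 - c * Z))
    by (unfold C, c, d; field; lra).
  eapply Rle_cv_lim; [| exact Hcv | exact HSv].
  intros N. simpl. rewrite <- Hid. apply sum_Rle. intros k _.
  destruct (Hk k) as (H1 & H2 & H3 & _).
  rewrite H2.
  set (y := - mu * r ^ 2 * f k) in *.
  assert (Hy : exp c * (1 + (y - c)) <= exp y).
  { replace y with (c + (y - c)) at 2 by ring. rewrite exp_plus.
    apply Rmult_le_compat_l; [left; apply exp_pos|apply exp_ineq1_le]. }
  eapply Rle_trans; [|exact H3].
  replace (C * (w k - d * (w k * f k) - c * w k)) with (2 * w k * (exp c * (1 + (y - c))))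
    by (unfold C, y, d; ring).
  apply Rmult_le_compat_l; lra.
Qed.
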